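(* Let $A=(a_1,\dots,a_n,a_\bot)$ with $1\le n\le m$ and $a_1,\dots,a_n$ distinct regular items, let $w:A^{\mathrm{ground}}\to\mathbb{R}$ satisfy $w(a_1)\ge\dots\ge w(a_n)\ge w(a_\bot)$, and let $\bar u,u:A^{\mathrm{ground}}\to[0,1]$ with $\bar u(a_\bot)=u(a_\bot)=1$ satisfy $\bar u(a)\ge u(a)$ for all $a$ in $A$. Then $f(A,\bar u,w)\ge f(A,u,w)$.
   Context: $A^{\mathrm{ground}}=\{a_1,\dots,a_N,a_\bot\}$ with regular items and a virtual item $a_\bot$; $1\le m\le N$. For a sequence $A$ of distinct elements of $A^{\mathrm{ground}}$ and functions $u,w$, $f(A,u,w)=\sum_{i=1}^{|A|}\prod_{j=1}^{i-1}(1-u(A(j)))\,u(A(i))\,w(A(i))$. *)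

(* Defs.v *)
From mathcomp Require Import all_boot all_order all_algebra.
Set Implicit Arguments. Unset Strict Implicit. Unset Printing Implicit Defensive.
Import Order.TTheory GRing.Theory Num.Theory.
Local Open Scope ring_scope.

(* Ground set A^ground = {a_1,...,a_N, a_bot}: regular items are [Some i]
   for i : 'I_N, the virtual item a_bot is [None]. *)
Definition ground (N : nat) := option 'I_N.
Definition a_bot {N : nat} : ground N := None.

Definition f {R : ringType} {N : nat} (A : seq (ground N))
    (u w : ground N -> R) : R :=
  \sum_(i < size A)
    (\prod_(j < i) (1 - u (nth a_bot A j))) * u (nth a_bot A i) * w (nth a_bot A i).

(* Main.v *)
Require Import Defs.
From mathcomp Require Import all_boot all_order all_algebra.
From mathcomp Require Import ring lra.
Import Order.TTheory GRing.Theory Num.Theory.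
Local Open Scope ring_scope.

Section G.
Variables (R : realFieldType) (N : nat).

Fixpoint g (u w : ground N -> R) (l : seq (ground N)) : R :=
  match l with [::] => 0 | a :: l => u a * w a + (1 - u a) * g u w l end.

Lemma f_g u w l : f l u w = g u w l.
Proof.
elim: l => [|a l IH]; first by rewrite /f big_ord0.
rewrite /f /= big_ord_recl /= big_ord0 mul1r -IH /f big_distrr /=.
congr (_ + _); apply: eq_bigr => i _.
by rewrite big_ord_recl /= !mulrA.
Qed.

Lemma g_bound u w l c :
  (forall x, 0 <= u x <= 1) -> (forall x, x \in l -> w x <= c) ->
  g u w l <= c * (1 - \prod_(x <- l) (1 - u x)).
Proof.
move=> hu; elim: l => [|a l IH] hw /=; first by rewrite big_nil; lra.
rewrite big_cons.
have := IH (fun x hx => hw x (mem_behead (s := a :: l) hx)).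
have hwa := hw a (mem_head _ _).
have /andP[h0 h1] := hu a.
set G := g u w l; set P := \prod_(_ <- _) _ => hG.
have : (1 - u a) * G <= (1 - u a) * (c * (1 - P)) by apply: ler_wpM2l; lra.
have : u a * w a <= u a * c by apply: ler_wpM2l.
move=> H1 H2; lra.
Qed.

Lemma g_mono u ub w b t :
  (forall x, 0 <= u x <= 1) -> (forall x, 0 <= ub x <= 1) ->
  u b = 1 -> ub b = 1 ->
  sorted (fun x y => y <= x) (map w (rcons t b)) ->
  (forall x, x \in rcons t b -> u x <= ub x) ->
  g u w (rcons t b) <= g ub w (rcons t b).
Proof.
move=> hu hub hb hbb; elim: t => [|a t IH] /= hs hle.
  by rewrite hb hbb.
have hsa : all (fun y => y <= w a) (map w (rcons t b)).
  by apply: (order_path_min _ hs) => x y z /= h1 h2; exact: le_trans h2 h1.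
have IH' := IH (path_sorted hs) (fun x hx => hle x (mem_behead (s := a :: rcons t b) hx)).
have hbd := @g_bound ub w (rcons t b) (w a) hub.
rewrite big_rcons /= hbb subrr mulr0 subr0 mulr1 in hbd.
have hGb : g ub w (rcons t b) <= w a.
  apply: hbd => x hx; move/allP: hsa; apply; exact: map_f.
have hla := hle a (mem_head _ _).
have /andP[h0 h1] := hu a; have /andP[h2 h3] := hub a.
set Gu := g u w (rcons t b) in IH' *; set Gb := g ub w (rcons t b) in IH' hGb *.
have E1 : 0 <= (ub a - u a) * (w a - Gb) by apply: mulr_ge0; lra.
have E2 : 0 <= (1 - u a) * (Gb - Gu) by apply: mulr_ge0; lra.
have -> : ub a * w a + (1 - ub a) * Gb =
  u a * w a + (1 - u a) * Gu + ((ub a - u a) * (w a - Gb) + (1 - u a) * (Gb - Gu)) by ring.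
lra.
Qed.
End G.

Theorem lemma14 (R : realFieldType) (N m : nat) (s : seq 'I_N)
    (w ubar u : ground N -> R) :
  (1 <= m)%N -> (m <= N)%N ->
  (1 <= size s)%N -> (size s <= m)%N -> uniq s ->
  let A := rcons (map Some s) a_bot in
  sorted (fun x y => y <= x) (map w A) ->
  (forall a, 0 <= u a <= 1) -> (forall a, 0 <= ubar a <= 1) ->
  ubar a_bot = 1 -> u a_bot = 1 ->
  (forall a, a \in A -> u a <= ubar a) ->
  f A u w <= f A ubar w.
Proof.
move=> _ _ _ _ _ A hs hu hub hb1 hb2 hle.
rewrite !f_g; exact: g_mono hu hub hb2 hb1 hs hle.
Qed.
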